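(* Let $k$ be a field of characteristic zero in which every element admits an $n$th root. Then for every multiplicatively alternating matrix $q\in M_n(k)$ there exists $\tau\in(k^\times)^n$ such that the matrix $\tau q\tau^{-1}$, with entries $\frac{\tau_i}{\tau_j}q_{ij}$, is normalized.
   Context: A matrix $q\in M_n(k)$ is multiplicatively alternating if all entries are invertible, $q_{ii}=1$ and $q_{ij}=q_{ji}^{-1}$. It is normalized if $\prod_jq_{ij}=1$ for all $i$. *)

(* Defs.v *)
From mathcomp Require Import all_boot all_order all_algebra.
Set Implicit Arguments. Unset Strict Implicit. Unset Printing Implicit Defensive.
Import GRing.Theory.
Local Open Scope ring_scope.

Definition mult_alternating (k : fieldType) (n : nat) (q : 'M[k]_n) : Prop :=
  [/\ forall i j, q i j != 0,
      forall i, q i i = 1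
    & forall i j, q i j = (q j i)^-1].

Definition normalized (k : fieldType) (n : nat) (q : 'M[k]_n) : Prop :=
  forall i, \prod_j q i j = 1.

Definition conj_diag (k : fieldType) (n : nat) (tau : 'I_n -> k) (q : 'M[k]_n)
  : 'M[k]_n := \matrix_(i, j) (tau i / tau j * q i j).

(* Main.v *)
Require Import Defs.
From mathcomp Require Import all_boot all_order all_algebra.
Local Open Scope ring_scope.
Import GRing.Theory.

Lemma total_prod (k : fieldType) (n : nat) (q : 'M[k]_n) (hq : mult_alternating q) :
  \prod_i \prod_j q i j = 1.
Proof.
case: hq => hnz hd hs.
rewrite pair_big /=.
rewrite (bigID (fun p : 'I_n * 'I_n => (p.1 < p.2)%N)) /=.
rewrite [X in _ * X](bigID (fun p : 'I_n * 'I_n => p.1 == p.2)) /=.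
rewrite [X in _ * (X * _)]big1; last by move=> p /andP [_ /eqP ->]; rewrite hd.
rewrite mul1r.
set A := \prod_(p | _) _.
have -> : \prod_(i : 'I_n * 'I_n | ~~ (i.1 < i.2)%N && (i.1 != i.2)) q i.1 i.2
          = \prod_(p : 'I_n * 'I_n | (p.1 < p.2)%N) (q p.1 p.2)^-1.
  rewrite (reindex_inj (inv_inj (@swap_pairK 'I_n 'I_n))) /=.
  apply: eq_big => [[a b]|[a b] _] /=; last by rewrite hs.
  rewrite -leqNgt; apply/andP/idP => [[h1 h2]|h].
    by rewrite ltn_neqAle h1 andbT; apply: contra h2 => /eqP/val_inj ->.
  split; first exact: ltnW.
  by apply/negP => /eqP ba; rewrite ba ltnn in h.
rewrite prodfV mulfV //; apply/prodf_neq0 => p _; exact: hnz.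
Qed.

Theorem lemma2p9 (k : fieldType) (n : nat)
  (hchar : [pchar k] =i pred0)
  (hroot : forall x : k, exists y : k, y ^+ n = x)
  (q : 'M[k]_n) (hq : mult_alternating q) :
  exists tau : 'I_n -> k, (forall i, tau i != 0) /\ normalized (conj_diag tau q).
Proof.
case: n hroot q hq => [|m] hroot q hq.
  by exists (fun _ => 1); split => [i|i]; case: i.
have hT := @total_prod _ _ q hq.
case: hq => hnz hd hs.
set r := fun i : 'I_m.+1 => \prod_j q i j.
have rnz : forall i, r i != 0 by move=> i; apply/prodf_neq0 => j _; exact: hnz.
have ex : forall x : k, exists y : k, y ^+ m.+1 == x.
  by move=> x; case: (hroot x) => y hy; exists y; rewrite hy.
pose s i := xchoose (ex (r i)^-1).
have sn : forall i, s i ^+ m.+1 = (r i)^-1 by move=> i; apply/eqP; exact: (xchooseP (ex (r i)^-1)).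
have snz : forall i, s i != 0.
  move=> i; have : s i ^+ m.+1 != 0 by rewrite sn invr_eq0 rnz.
  by rewrite expf_eq0.
set z := \prod_i s i.
have znz : z != 0 by apply/prodf_neq0 => i _; exact: snz.
have zn : z ^+ m.+1 = 1.
  rewrite /z -prodrXl; under eq_bigr do rewrite sn.
  by rewrite prodfV hT invr1.
pose tau i := if i == ord0 then s i / z else s i.
have taun : forall i, tau i ^+ m.+1 = (r i)^-1.
  move=> i; rewrite /tau; case: ifP => _ //.
  by rewrite expr_div_n zn divr1.
have taunz : forall i, tau i != 0.
  move=> i; rewrite /tau; case: ifP => _; last exact: snz.
  by rewrite mulf_neq0 ?invr_eq0.
have ptau : \prod_i tau i = 1.
  rewrite (bigD1 ord0) //= /tau eqxx.
  under eq_bigr => i /negbTE -> do [].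
  rewrite mulrAC -(@bigD1 _ _ _ _ ord0 xpredT s) //= -/z mulfV //.
exists tau; split => // i.
under eq_bigr do rewrite mxE.
rewrite big_split big_split /= prodr_const card_ord prodfV ptau invr1 mulr1.
by rewrite taun -/(r i) mulVf.
Qed.
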